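(* Assume (A1)–(A2). Let $\eta>0$, $x_t\in\mathcal X$, $y_t:=q(x_t)$, and let $g_t\in\mathbb R^d$ be any vector with $\|g_t\|_2\le\hat G_F$ for some $\hat G_F>0$. Set $\tilde g_t:=J_q(x_t)^{-\top}g_t$ and define $$y_{t+1}=\arg\min_{y\in\mathcal Y}\Big\{\tilde g_t^\top(y-y_t)+\tfrac1\eta D_R(y\|y_t)\Big\},\qquad x_{t+1}=\arg\min_{x\in\mathcal X}\Big\{g_t^\top(x-x_t)+\tfrac1{2\eta}\|x-x_t\|_2^2\Big\}.$$ Then $$\|y_{t+1}-q(x_{t+1})\|_2\le G^5\big(5\hat G_F^2+\hat G_F^3\eta\big)\eta^2.$$
   Context: $\mathcal X,\mathcal Y\subset\mathbb R^d$ are convex compact sets and $q:\mathcal X\to\mathcal Y$ is a smooth bijection with Jacobian $J_q(x)$; $M^{-\top}$ denotes the inverse transpose. Bregman divergence $D_R(x\|y)=R(x)-R(y)-\nabla R(y)^\top(x-y)$. (A1) There is a twice continuously differentiable, strictly convex $R:\mathcal Y\to\mathbb R$ such that $[\nabla^2R(q(x))]^{-1}=J_q(x)J_q(x)^\top$ for all $x\in\mathcal X$. (A2) There is $G>1$ such that: $q$ is $G$-Lipschitz on $\mathcal X$; the first and second derivatives of $q^{-1}$ are bounded by $G$; $R$ is $1$-strongly convex (Euclidean norm) and smooth with first and third derivatives bounded by $G$; for every $z\in\mathcal Y$ the map $w\mapsto D_R(z\|w)$ is $G$-Lipschitz. *)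

(* Defs.v *)
From HB Require Import structures.
From mathcomp Require Import all_boot all_order all_algebra.
From mathcomp Require Import all_classical all_reals all_analysis.
Set Implicit Arguments. Unset Strict Implicit. Unset Printing Implicit Defensive.
Import Order.TTheory GRing.Theory Num.Theory.
Import numFieldNormedType.Exports.
Local Open Scope ring_scope.
Local Open Scope classical_set_scope.

Section Defs.
Context {R : realType} {d : nat}.

Definition dotv (u v : 'rV[R]_d) : R := \sum_(i < d) u 0 i * v 0 i.
Definition enorm (u : 'rV[R]_d) : R := Num.sqrt (dotv u u).

Definition ebasis (i : 'I_d) : 'rV[R]_d := delta_mx 0 i.

Definition convex_set_rV (X : set 'rV[R]_d) : Prop :=
  forall x y t, X x -> X y -> 0 <= t <= 1 -> X (t *: x + (1 - t) *: y).

Definition iterD {W : normedModType R} (vs : seq 'rV[R]_d)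
  (f : 'rV[R]_d -> W) : 'rV[R]_d -> W :=
  foldr (fun v g => 'D_v g) f vs.

Definition smooth {W : normedModType R} (f : 'rV[R]_d -> W) : Prop :=
  forall (vs : seq 'rV[R]_d) (x : 'rV[R]_d), differentiable (iterD vs f) x.

Definition grad (f : 'rV[R]_d -> R) (y : 'rV[R]_d) : 'rV[R]_d :=
  \row_i 'D_(ebasis i) f y.
Definition hess (f : 'rV[R]_d -> R) (y : 'rV[R]_d) : 'M[R]_d :=
  \matrix_(i, j) 'D_(ebasis j) ('D_(ebasis i) f) y.

(* Jacobian in the usual convention: (Jac q x) i j = d q_i / d x_j.
   (MathComp's 'J q x is the transpose, since it acts on row vectors.) *)
Definition Jac (q : 'rV[R]_d -> 'rV[R]_d) (x : 'rV[R]_d) : 'M[R]_d :=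
  ('J q x)^T.

Definition bregman (F : 'rV[R]_d -> R) (x y : 'rV[R]_d) : R :=
  F x - F y - dotv (grad F y) (x - y).

End Defs.

(* Main.v *)
Require Import Defs.
From HB Require Import structures.
From mathcomp Require Import all_boot all_order all_algebra.
From mathcomp Require Import all_classical all_reals all_analysis.
From mathcomp Require Import ring lra.
Set Implicit Arguments. Unset Strict Implicit. Unset Printing Implicit Defensive.
Import Order.TTheory GRing.Theory Num.Theory.
Import numFieldNormedType.Exports.
Local Open Scope ring_scope.
Local Open Scope classical_set_scope.

Section DotLemmas.
Context {R : realType} {d : nat}.
Implicit Types u v w : 'rV[R]_d.

Lemma dotvC u v : dotv u v = dotv v u.
Proof. by rewrite /dotv; apply: eq_bigr => i _; rewrite mulrC. Qed.

Lemma dotvDl u v w : dotv (u + v) w = dotv u w + dotv v w.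
Proof. by rewrite /dotv -big_split; apply: eq_bigr => i _; rewrite mxE mulrDl. Qed.

Lemma dotvZl a u w : dotv (a *: u) w = a * dotv u w.
Proof. by rewrite /dotv mulr_sumr; apply: eq_bigr => i _; rewrite mxE mulrA. Qed.

Lemma dotvNl u w : dotv (- u) w = - dotv u w.
Proof. by rewrite -scaleN1r dotvZl mulN1r. Qed.

Lemma dotvBl u v w : dotv (u - v) w = dotv u w - dotv v w.
Proof. by rewrite dotvDl dotvNl. Qed.

Lemma dotvDr u v w : dotv w (u + v) = dotv w u + dotv w v.
Proof. by rewrite dotvC dotvDl !(dotvC w). Qed.
Lemma dotvZr a u w : dotv w (a *: u) = a * dotv w u.
Proof. by rewrite dotvC dotvZl dotvC. Qed.
Lemma dotvNr u w : dotv w (- u) = - dotv w u.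
Proof. by rewrite dotvC dotvNl dotvC. Qed.
Lemma dotvBr u v w : dotv w (u - v) = dotv w u - dotv w v.
Proof. by rewrite dotvDr dotvNr. Qed.
Lemma dotv0l w : dotv 0 w = 0.
Proof. by rewrite /dotv big1 // => i _; rewrite mxE mul0r. Qed.
Lemma dotv0r w : dotv w 0 = 0.
Proof. by rewrite dotvC dotv0l. Qed.

Lemma dotvv_ge0 u : 0 <= dotv u u.
Proof. by rewrite /dotv; apply: sumr_ge0 => i _; rewrite -expr2 sqr_ge0. Qed.

Lemma dotvv_eq0 u : dotv u u = 0 -> u = 0.
Proof.
move=> /eqP; rewrite /dotv psumr_eq0; last by move=> i _; rewrite -expr2 sqr_ge0.
move=> /allP H; apply/rowP => i; rewrite mxE.
by have /(_ (mem_index_enum i)) := H i; rewrite -expr2 sqrf_eq0 => /eqP.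
Qed.

Lemma enorm_ge0 u : 0 <= enorm u.
Proof. exact: sqrtr_ge0. Qed.

Lemma enorm_sq u : enorm u ^+ 2 = dotv u u.
Proof. by rewrite /enorm sqr_sqrtr // dotvv_ge0. Qed.

Lemma dotv_mx u v : dotv u v = (u *m v^T) 0 0.
Proof. by rewrite /dotv mxE; apply: eq_bigr => i _; rewrite mxE. Qed.

Lemma enormZ a u : enorm (a *: u) = `|a| * enorm u.
Proof.
rewrite /enorm dotvZl dotvZr mulrA -expr2 sqrtrM ?sqr_ge0 //.
by rewrite sqrtr_sqr.
Qed.

Lemma enormN u : enorm (- u) = enorm u.
Proof. by rewrite -scaleN1r enormZ normrN1 mul1r. Qed.

Lemma enorm_sub u v : enorm (u - v) = enorm (v - u).
Proof. by rewrite -enormN opprB. Qed.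

Lemma enorm0 : enorm (0 : 'rV[R]_d) = 0.
Proof. by rewrite /enorm dotv0l sqrtr0. Qed.

Lemma dotv_le u v : dotv u v <= enorm u * enorm v.
Proof.
have [u0|un0] := eqVneq (enorm u) 0.
  have : dotv u u = 0 by rewrite -enorm_sq u0 expr2 mulr0.
  by move/dotvv_eq0 => ->; rewrite dotv0l enorm0 mul0r.
have [v0|vn0] := eqVneq (enorm v) 0.
  have : dotv v v = 0 by rewrite -enorm_sq v0 expr2 mulr0.
  by move/dotvv_eq0 => ->; rewrite dotv0r enorm0 mulr0.
set a := enorm u; set b := enorm v.
have a0 : 0 < a by rewrite lt_def un0 enorm_ge0.
have b0 : 0 < b by rewrite lt_def vn0 enorm_ge0.
have := dotvv_ge0 (b *: u - a *: v).
rewrite dotvBl !dotvBr !dotvZl !dotvZr -!enorm_sq -/a -/b (dotvC v u) => H.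
have : 0 <= 2 * a * b * (a * b - dotv u v) by lra.
by rewrite pmulr_rge0 ?subr_ge0 // !mulr_gt0.
Qed.

Lemma dotv_abs u v : `|dotv u v| <= enorm u * enorm v.
Proof.
rewrite ler_norml dotv_le andbT -(enormN u) lerNl -dotvNl.
exact: dotv_le.
Qed.

Lemma enormD u v : enorm (u + v) <= enorm u + enorm v.
Proof.
rewrite -(@ler_pXn2r _ 2) ?nnegrE ?addr_ge0 ?enorm_ge0 //.
rewrite enorm_sq dotvDl !dotvDr -!enorm_sq (dotvC v u).
have := dotv_le u v; nra.
Qed.

Lemma enorm_le_dot u M : 0 <= M -> (forall c, dotv c u <= M * enorm c) ->
  enorm u <= M.
Proof.
move=> M0 H.
have [u0|un0] := eqVneq (enorm u) 0; first by rewrite u0.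
have a0 : 0 < enorm u by rewrite lt_def un0 enorm_ge0.
have := H u; rewrite -enorm_sq expr2 => h.
by rewrite -(ler_pM2r a0).
Qed.

End DotLemmas.

Section Line.
Context {R : realType} {d : nat}.

Lemma line_derive (W : normedModType R) (f : 'rV[R]_d -> W) p w t :
  derivable f (p + t *: w) w ->
  is_derive t 1 (fun s : R => f (p + s *: w)) ('D_w f (p + t *: w)).
Proof.
move=> df.
have E : (fun h : R => h^-1 *: (((fun s : R => f (p + s *: w)) \o shift t) (h *: 1)
            - f (p + t *: w))) =
         (fun h : R => h^-1 *: ((f \o shift (p + t *: w)) (h *: w) - f (p + t *: w))).
  apply/funext => h /=; congr (_ *: (f _ - _)).
  by rewrite [h%:A]mulr1 scalerDl addrCA addrA.
split; first by rewrite /derivable E.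
by rewrite /derive E.
Qed.

End Line.

Section Real.
Context {R : realType}.

Lemma cont_of_der (f df : R -> R) (a b : R) : (forall t : R, is_derive t (1:R) f (df t)) ->
  {within `[a, b], continuous f}.
Proof.
move=> H; apply: continuous_subspaceT => x.
have dx : derivable f x 1 by case: (H x).
exact/differentiable_continuous/derivable1_diffP.
Qed.

Lemma lipab (f df : R -> R) (a b M : R) : a <= b ->
  (forall t : R, is_derive t (1:R) f (df t)) -> (forall t, a <= t <= b -> df t <= M) ->
  f b - f a <= M * (b - a).
Proof.
move=> ab H B.
have [c c01 ->] := MVT_segment ab (fun x _ => H x) (cont_of_der (a:=a) (b:=b) H).
apply: ler_wpM2r; first by rewrite subr_ge0.
by apply: B; move: c01; rewrite in_itv.
Qed.

Lemma is_derive_k (f df : R -> R) (c M t : R) : (forall t : R, is_derive t (1:R) f (df t)) ->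
  is_derive t 1 (fun s => f s - s * c - M / 2 * s ^+ 2) (df t - c - M * t).
Proof.
move=> H; have Ht := H t.
apply: is_derive_eq.
rewrite scaler0 add0r /GRing.scale /= !mulr1; lra.
Qed.

Lemma taylor01 (f df ddf : R -> R) (M : R) :
  (forall t : R, is_derive t (1:R) f (df t)) ->
  (forall t : R, is_derive t (1:R) df (ddf t)) ->
  (forall t, 0 <= t <= 1 -> ddf t <= M) ->
  f 1 - f 0 - df 0 <= M / 2.
Proof.
move=> Hf Hdf B.
pose k s := f s - s * df 0 - M / 2 * s ^+ 2.
have := lipab (f:=k) (df:=fun t => df t - df 0 - M * t) (M:=0) ler01
  (fun t => is_derive_k (df 0) M t Hf).
have h : forall t, 0 <= t <= 1 -> df t - df 0 - M * t <= 0.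
  move=> t /andP[t0 t1].
  have := lipab (M:=M) t0 Hdf.
  have : forall s, 0 <= s <= t -> ddf s <= M.
    move=> s /andP[s0 st]; apply: B; apply/andP; split => //; exact: le_trans st t1.
  move=> hh /(_ hh); rewrite subr0; lra.
move=> /(_ h); rewrite /k mul0r expr1n expr0n /=; lra.
Qed.

Lemma is_derive_opp (f df : R -> R) :
  (forall t : R, is_derive t (1:R) f (df t)) ->
  (forall t : R, is_derive t (1:R) (fun s => - f s) (- df t)).
Proof. by move=> H t; have Ht := H t; apply: is_derive_eq. Qed.

Lemma taylor01_abs (f df ddf : R -> R) (M : R) :
  (forall t : R, is_derive t (1:R) f (df t)) ->
  (forall t : R, is_derive t (1:R) df (ddf t)) ->
  (forall t, 0 <= t <= 1 -> `|ddf t| <= M) ->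
  `|f 1 - f 0 - df 0| <= M / 2.
Proof.
move=> Hf Hdf B; rewrite ler_norml; apply/andP; split.
  have := taylor01 (M:=M)
    (is_derive_opp Hf) (is_derive_opp Hdf).
  have : forall t, 0 <= t <= 1 -> - ddf t <= M.
    by move=> t /B; rewrite ler_norml => /andP[]; rewrite lerNl.
  move=> h /(_ h); lra.
apply: taylor01 Hf Hdf _ => t /B; rewrite ler_norml => /andP[].
by [].
Qed.

Lemma lip01_abs (f df : R -> R) (M : R) :
  (forall t : R, is_derive t (1:R) f (df t)) ->
  (forall t, 0 <= t <= 1 -> `|df t| <= M) ->
  `|f 1 - f 0| <= M.
Proof.
move=> Hf B; rewrite ler_norml; apply/andP; split.
  have := lipab (M:=M) ler01 (is_derive_opp Hf).
  have : forall t, 0 <= t <= 1 -> - df t <= M.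
    by move=> t /B; rewrite ler_norml => /andP[]; rewrite lerNl.
  move=> h /(_ h); rewrite subr0 mulr1; lra.
have := lipab (M:=M) ler01 Hf.
have : forall t, 0 <= t <= 1 -> df t <= M.
  by move=> t /B; rewrite ler_norml => /andP[].
move=> h /(_ h); rewrite subr0 mulr1; lra.
Qed.

Lemma le_of_forall_t (A K : R) : 0 <= K -> (forall t, 0 < t < 1 -> (1 - t) * K <= A) -> K <= A.
Proof.
move=> K0 H; rewrite leNgt; apply/negP => AK.
have hA : 0 <= A by have := H (1/2); rewrite !ltr_pdivrMr //; lra.
have t01 : 0 < (K - A) / (2 * K) < 1.
  have Kp : 0 < K by lra.
  rewrite divr_gt0 ?ltr_pdivrMr ?mulr_gt0 //; lra.
have := H _ t01.
have Kp : 0 < K by lra.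
have -> : (1 - (K - A) / (2 * K)) * K = (K + A) / 2.
  by field; rewrite gt_eqF.
lra.
Qed.
End Real.

Section Real2.
Context {R : realType}.
Lemma quad_bound (n c e : R) : 0 <= n -> 0 < e -> 0 <= c -> n ^+ 2 <= c * e * n -> n <= c * e.
Proof.
move=> n0 e0 c0 h.
have [->|np] := eqVneq n 0; first by rewrite mulr_ge0 // ltW.
have np' : 0 < n by rewrite lt_def np n0.
by move: h; rewrite expr2 ler_pM2r.
Qed.
End Real2.

Section Vec.
Context {R : realType} {d : nat}.
Local Notation V := ('rV[R]_d).

Lemma comp_derive (F : V -> V) y w i : derivable F y w ->
  is_derive y w (fun z => F z 0 i) (('D_w F y) 0 i).
Proof.
move=> dF; split.
  by move/derivable_mxP : dF => /(_ 0 i).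
by rewrite derive_mx // mxE.
Qed.

Lemma dot_derive c (F : V -> V) y w : derivable F y w ->
  is_derive y w (fun z => dotv c (F z)) (dotv c ('D_w F y)).
Proof.
move=> dF.
have E : (fun z => dotv c (F z)) = \sum_(i < d) (fun z => c 0 i * F z 0 i).
  by rewrite fct_sumE.
rewrite E /dotv; apply: is_derive_sum => i.
have Hi := comp_derive i dF.
by apply: is_derive_eq.
Qed.

Lemma dot2_derive (F : V -> V) y w : derivable F y w ->
  is_derive y w (fun z => dotv (F z) (F z)) (2 * dotv (F y) ('D_w F y)).
Proof.
move=> dF.
have E : (fun z => dotv (F z) (F z)) = \sum_(i < d) (fun z => F z 0 i * F z 0 i).
  by rewrite fct_sumE.
rewrite E /dotv mulr_sumr; apply: is_derive_sum => i.
have Hi := comp_derive i dF.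
apply: is_derive_eq.
rewrite /GRing.scale /=; ring.
Qed.

Lemma smooth0 (W : normedModType R) (f : V -> W) y : smooth f -> differentiable f y.
Proof. by move=> /(_ [::] y). Qed.
Lemma smooth1 (W : normedModType R) (f : V -> W) v y : smooth f ->
  differentiable ('D_v f) y.
Proof. by move=> /(_ [:: v] y). Qed.
Lemma smooth2 (W : normedModType R) (f : V -> W) v w y : smooth f ->
  differentiable ('D_w ('D_v f)) y.
Proof. by move=> /(_ [:: w; v] y). Qed.

Lemma DlinP (W : normedModType R) (f : V -> W) y (a : R) u v : differentiable f y ->
  'D_(a *: u + v) f y = a *: 'D_u f y + 'D_v f y.
Proof. by move=> df; rewrite !deriveE // linearP. Qed.

Lemma DlinB (W : normedModType R) (f : V -> W) y u v : differentiable f y ->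
  'D_(u - v) f y = 'D_u f y - 'D_v f y.
Proof. by move=> df; rewrite !deriveE // linearB. Qed.

Lemma DlinZ (W : normedModType R) (f : V -> W) y (a : R) u : differentiable f y ->
  'D_(a *: u) f y = a *: 'D_u f y.
Proof. by move=> df; rewrite !deriveE // linearZ. Qed.

Lemma Dbasis (W : normedModType R) (f : V -> W) y w : differentiable f y ->
  'D_w f y = \sum_(j < d) w 0 j *: 'D_(ebasis j) f y.
Proof.
move=> df; rewrite deriveE // {1}(row_sum_delta w) linear_sum.
by apply: eq_bigr => j _; rewrite linearZ /= -deriveE.
Qed.

Lemma grad_dot (f : V -> R) y v : differentiable f y ->
  dotv (grad f y) v = 'D_v f y.
Proof.
move=> df; rewrite (Dbasis v df) /dotv; apply: eq_bigr => j _.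
by rewrite mxE mulrC.
Qed.


Lemma hess_form (f : V -> R) v w y : smooth f ->
  'D_w ('D_v f) y = (v *m hess f y *m w^T) 0 0.
Proof.
move=> sf.
have E : 'D_v f = \sum_(i < d) (fun z => v 0 i * 'D_(ebasis i) f z).
  rewrite fct_sumE; apply/funext => z.
  by rewrite (Dbasis v (smooth0 z sf)).
have Hi : forall i, is_derive y w (fun z => v 0 i * 'D_(ebasis i) f z)
    (v 0 i * 'D_w ('D_(ebasis i) f) y).
  move=> i.
  have Hd : is_derive y w ('D_(ebasis i) f) ('D_w ('D_(ebasis i) f) y).
    exact/derivableP/diff_derivable/smooth1.
  by apply: is_derive_eq.
rewrite E; have := is_derive_sum Hi => /(@derive_val _ _ _ _ _ _ _) ->.
rewrite mxE.
under [RHS]eq_bigr => j _ do rewrite !mxE big_distrl /=.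
rewrite exchange_big /=; apply: eq_bigr => i _.
rewrite (Dbasis w (smooth1 _ _ sf)) mulr_sumr.
apply: eq_bigr => j _; rewrite !mxE /GRing.scale /=; ring.
Qed.


Lemma chain_id (q qinv : V -> V) (Y : set V) yt y :
  convex_set_rV Y -> Y yt -> Y y -> (forall z, Y z -> q (qinv z) = z) ->
  differentiable qinv yt -> differentiable q (qinv yt) ->
  'D_(y - yt) qinv yt *m 'J q (qinv yt) = y - yt.
Proof.
move=> cY Yt Yy qq dqi dq.
set a := y - yt.
have dc : differentiable (q \o qinv) yt by apply: differentiable_comp.
have E1 : 'D_a (q \o qinv) yt = 'D_a qinv yt *m 'J q (qinv yt).
  rewrite deriveE // diff_comp //= deriveE //.
  by rewrite /jacobian mul_rV_lin1.
rewrite -E1.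
have dd : derivable (q \o qinv) yt a by apply: diff_derivable.
have h1 := cvg_dnbhs_at_right dd.
set Qf := (fun h : R => h^-1 *: (((q \o qinv) \o shift yt) (h *: a) - (q \o qinv) yt)) in h1.
have h2 : Qf @ 0^'+ --> a.
  apply: cvg_near_cst; near=> h.
  have h0 : 0 < h by near: h; exact: nbhs_right_gt.
  have h1' : h < 1 by near: h; apply: nbhs_right_lt; exact: ltr01.
  rewrite /Qf /=.
  have -> : q (qinv (h *: a + yt)) = h *: a + yt.
    apply: qq; have -> : h *: a + yt = h *: y + (1 - h) *: yt.
      by rewrite /a scalerBr scalerBl scale1r addrA addrAC.
    by apply: cY => //; rewrite (ltW h0) (ltW h1').
  have -> : q (qinv yt) = yt by apply: qq.
  by rewrite addrK scalerA mulVf ?gt_eqF // scale1r.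
exact: (cvg_unique _ h1 h2).
Unshelve. all: by end_near.
Qed.

End Vec.

Section Mx.
Context {R : realType} {d : nat}.

Lemma hess_inv_form (H M : 'M[R]_d) : H \in unitmx -> invmx H = M^T *m M ->
  M \in unitmx /\ H = invmx M *m (invmx M)^T.
Proof.
move=> uH eH.
have uMM : M^T *m M \in unitmx by rewrite -eH unitmx_inv.
have uM : M \in unitmx by move: uMM; rewrite unitmx_mul => /andP[].
split => //.
have e1 : H *m (M^T *m M) = 1%:M by rewrite -eH mulmxV.
have e2 : (M^T *m M) *m (invmx M *m (invmx M)^T) = 1%:M.
  by rewrite -mulmxA (mulmxA M) mulmxV // mul1mx -trmx_mul mulVmx // trmx1.
by rewrite -[H]mulmx1 -e2 mulmxA e1 mul1mx.
Qed.

Lemma gt_form (M : 'M[R]_d) (g : 'rV[R]_d) :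
  ((invmx (M^T))^T *m g^T)^T = g *m (invmx M)^T.
Proof. by rewrite trmx_mul trmxK -trmx_inv trmxK. Qed.

Lemma gt_dot (M : 'M[R]_d) (g v : 'rV[R]_d) :
  dotv (g *m (invmx M)^T) v = dotv g (v *m invmx M).
Proof. by rewrite !dotv_mx trmx_mul mulmxA. Qed.

Lemma hess_dot (M : 'M[R]_d) (v w : 'rV[R]_d) :
  (v *m (invmx M *m (invmx M)^T) *m w^T) 0 0 = dotv (v *m invmx M) (w *m invmx M).
Proof. by rewrite dotv_mx trmx_mul !mulmxA. Qed.

End Mx.

Section Aux.
Context {R : realType} {d : nat}.
Local Notation V := ('rV[R]_d).

Lemma comb_eq (z y : V) (t : R) : t *: z + (1 - t) *: y = y + t *: (z - y).
Proof. by rewrite scalerBl scale1r scalerBr addrCA addrA addrAC. Qed.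

Lemma enorm_comb2 (a b : V) t :
  enorm (t *: a + (1 - t) *: b) ^+ 2 =
  t * enorm a ^+ 2 + (1 - t) * enorm b ^+ 2 - t * (1 - t) * enorm (a - b) ^+ 2.
Proof.
rewrite !enorm_sq !(dotvDl, dotvDr, dotvNl, dotvNr, dotvZl, dotvZr) (dotvC b a).
ring.
Qed.

Lemma enormZ2 (c : R) (u : V) : enorm (c *: u) ^+ 2 = c ^+ 2 * enorm u ^+ 2.
Proof. by rewrite !enorm_sq dotvZl dotvZr mulrA expr2. Qed.

Lemma SCcomb (F : V -> R) (S : set V) :
  (forall x y, S x -> S y -> F x >= F y + dotv (grad F y) (x - y) + 2^-1 * enorm (x - y) ^+ 2) ->
  forall z y t, S z -> S y -> S (t *: z + (1 - t) *: y) -> 0 <= t <= 1 ->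
  F (t *: z + (1 - t) *: y) <= t * F z + (1 - t) * F y - t * (1 - t) / 2 * enorm (z - y) ^+ 2.
Proof.
move=> H z y t Sz Sy Sm /andP[t0 t1]; set m := t *: z + (1 - t) *: y.
have e1 : z - m = (1 - t) *: (z - y).
  by rewrite /m comb_eq opprD addrA scalerBl scale1r.
have e2 : y - m = - (t *: (z - y)).
  by rewrite /m comb_eq opprD addrA subrr add0r.
have h1 := H z m Sz Sm; have h2 := H y m Sy Sm.
rewrite e1 in h1; rewrite e2 in h2.
rewrite enormN enormZ2 in h2; rewrite enormZ2 in h1.
rewrite dotvNr dotvZr in h2; rewrite dotvZr in h1.
set l := dotv (grad F m) (z - y) in h1 h2.
set N := enorm (z - y) ^+ 2 in h1 h2 *.
have t1' : 0 <= 1 - t by rewrite subr_ge0.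
have a : 0 <= t * (F z - (F m + (1 - t) * l + 2^-1 * ((1 - t) ^+ 2 * N))).
  by rewrite mulr_ge0 // subr_ge0.
have b : 0 <= (1 - t) * (F y - (F m - t * l + 2^-1 * (t ^+ 2 * N))).
  by rewrite mulr_ge0 // subr_ge0.
rewrite -subr_ge0.
have -> : t * F z + (1 - t) * F y - t * (1 - t) / 2 * N - F m =
  t * (F z - (F m + (1 - t) * l + 2^-1 * ((1 - t) ^+ 2 * N))) +
  (1 - t) * (F y - (F m - t * l + 2^-1 * (t ^+ 2 * N))) by field.
exact: addr_ge0.
Qed.

Lemma min_strong (F : V -> R) (S : set V) (y0 : V) (k : R) :
  convex_set_rV S -> S y0 -> 0 <= k ->
  (forall z, S z -> F y0 <= F z) ->
  (forall z t, S z -> 0 < t < 1 ->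
     F (t *: z + (1 - t) *: y0) <= t * F z + (1 - t) * F y0 - t * (1 - t) * k * enorm (z - y0) ^+ 2) ->
  forall z, S z -> k * enorm (z - y0) ^+ 2 <= F z - F y0.
Proof.
move=> cS Sy k0 opt H z Sz.
apply: le_of_forall_t; first by rewrite mulr_ge0 // exprn_ge0 // enorm_ge0.
move=> t /andP[t0 t1].
have Sm : S (t *: z + (1 - t) *: y0) by apply: cS => //; rewrite (ltW t0) (ltW t1).
have := le_trans (opt _ Sm) (H z t Sz (introT andP (conj t0 t1))).
set K := k * _; move=> h.
have : t * ((1 - t) * K) <= t * (F z - F y0).
  rewrite /K; move: h; set N := enorm _ ^+ 2; move=> h; nra.
by rewrite ler_pM2l.
Qed.

Lemma line_dot (F : V -> V) c p w s : derivable F (p + s *: w) w ->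
  is_derive s (1:R) (fun s => dotv c (F (p + s *: w))) (dotv c ('D_w F (p + s *: w))).
Proof.
move=> dF; have h := dot_derive c dF.
have := @line_derive R d _ (fun y => dotv c (F y)) p w s (@ex_derive _ _ _ _ _ _ _ h).
by rewrite derive_val.
Qed.


Lemma dot_derive' c (F : V -> V) y w dF : is_derive y w F dF ->
  is_derive y w (fun z => dotv c (F z)) (dotv c dF).
Proof.
move=> h; have := dot_derive c (@ex_derive _ _ _ _ _ _ _ h).
by rewrite derive_val.
Qed.

Lemma dot2_derive' (F : V -> V) y w dF : is_derive y w F dF ->
  is_derive y w (fun z => dotv (F z) (F z)) (2 * dotv (F y) dF).
Proof.
move=> h; have := dot2_derive (@ex_derive _ _ _ _ _ _ _ h).
by rewrite derive_val.
Qed.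

End Aux.

Section F.
Context {R : realType}.
Lemma final_arith (G eta Ghat Nv Nx D : R) : 1 < G -> 0 < eta -> 0 < Ghat -> 0 <= Nv -> 0 <= Nx ->
  (2 * eta)^-1 * Nv ^+ 2 + (2 * eta)^-1 * Nx ^+ 2 <= D ->
  D <= Nv * (eta * G ^+ 2 * Ghat ^+ 2 * (1 + G / 2 + 3 * G ^+ 2 / 2)) -> Nv <= G * Nx ->
  Nv <= G ^+ 5 * (5 * Ghat ^+ 2 + Ghat ^+ 3 * eta) * eta ^+ 2.
Proof.
move=> G1 e0 h0 Nv0 Nx0 h1 h2 h3.
have G0 : 0 < G by lra.
set Lc := eta * G ^+ 2 * Ghat ^+ 2 * (1 + G / 2 + 3 * G ^+ 2 / 2) in h2.
have k1 : Nv ^+ 2 + Nx ^+ 2 <= 2 * eta * Nv * Lc.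
  have := le_trans h1 h2 => h.
  have := ler_wpM2l (ltW (mulr_gt0 (ltr0Sn _ 1) e0)) h.
  have -> : 2 * eta * ((2 * eta)^-1 * Nv ^+ 2 + (2 * eta)^-1 * Nx ^+ 2) = Nv ^+ 2 + Nx ^+ 2.
    by field; rewrite gt_eqF.
  move=> h'; apply: (le_trans h'); rewrite le_eqVlt; apply/orP; left; apply/eqP; ring.
have k2 : Nv ^+ 2 <= G ^+ 2 * Nx ^+ 2.
  by rewrite -exprMn ler_sqr // nnegrE mulr_ge0 // ltW.
have k3 : (G ^+ 2 + 1) * Nv ^+ 2 <= 2 * eta * G ^+ 2 * Lc * Nv.
  have := ler_wpM2l (ltW (exprn_gt0 2 G0)) k1; nra.
have k4 : 2 * eta * G ^+ 2 * Lc <= (G ^+ 2 + 1) * (G ^+ 5 * (5 * Ghat ^+ 2 + Ghat ^+ 3 * eta) * eta ^+ 2).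
  have p0 : 0 <= eta ^+ 2 * G ^+ 4 * Ghat ^+ 2 by rewrite !mulr_ge0 // ?exprn_ge0 // ltW.
  have q0 : 2 + G + 3 * G ^+ 2 <= 5 * G * (G ^+ 2 + 1) by nra.
  have r0 : 0 <= eta ^+ 2 * G ^+ 4 * Ghat ^+ 2 * (G * (G ^+ 2 + 1) * Ghat * eta).
    apply: mulr_ge0 p0 _; have := ltW G0; have := ltW h0; have := ltW e0.
    move=> a b c; rewrite !mulr_ge0 // addr_ge0 // exprn_ge0 //.
  have := ler_wpM2l p0 q0.
  have -> : 2 * eta * G ^+ 2 * Lc = eta ^+ 2 * G ^+ 4 * Ghat ^+ 2 * (2 + G + 3 * G ^+ 2).
    by rewrite /Lc; field.
  have -> : (G ^+ 2 + 1) * (G ^+ 5 * (5 * Ghat ^+ 2 + Ghat ^+ 3 * eta) * eta ^+ 2) =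
     eta ^+ 2 * G ^+ 4 * Ghat ^+ 2 * (5 * G * (G ^+ 2 + 1)) +
     eta ^+ 2 * G ^+ 4 * Ghat ^+ 2 * (G * (G ^+ 2 + 1) * Ghat * eta) by ring.
  lra.
have [->|nz] := eqVneq Nv 0.
  have := ltW G0; have := ltW h0; have := ltW e0.
  move=> a b c; rewrite !mulr_ge0 // ?exprn_ge0 // addr_ge0 // mulr_ge0 // exprn_ge0 //.
have Nvp : 0 < Nv by rewrite lt_def nz Nv0.
have k5 : (G ^+ 2 + 1) * Nv <= 2 * eta * G ^+ 2 * Lc.
  by move: k3; rewrite [Nv ^+ 2]expr2 mulrA ler_pM2r.
have gp : 0 < G ^+ 2 + 1 by rewrite addr_gt0 // exprn_gt0.
by rewrite -(ler_pM2l gp); apply: le_trans k5 k4.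
Qed.
End F.

Theorem propositionA1 (R : realType) (d : nat)
  (X Y : set 'rV[R]_d) (q qinv : 'rV[R]_d -> 'rV[R]_d) (Rf : 'rV[R]_d -> R)
  (G eta Ghat : R) (xt : 'rV[R]_d) (g : 'rV[R]_d) (y1 x1 : 'rV[R]_d) :
  (* X, Y convex compact *)
  convex_set_rV X -> compact X -> convex_set_rV Y -> compact Y ->
  (* q : X -> Y smooth bijection, with inverse qinv : Y -> X *)
  smooth q ->
  (forall x, X x -> Y (q x)) ->
  (forall y, Y y -> X (qinv y)) ->
  (forall x, X x -> qinv (q x) = x) ->
  (forall y, Y y -> q (qinv y) = y) ->
  (* (A1) *)
  smooth Rf ->
  (forall x y t, Y x -> Y y -> x != y -> 0 < t < 1 ->
     Rf (t *: x + (1 - t) *: y) < t * Rf x + (1 - t) * Rf y) ->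
  (forall x, X x -> hess Rf (q x) \in unitmx /\
     invmx (hess Rf (q x)) = Jac q x *m (Jac q x)^T) ->
  (* (A2) *)
  1 < G ->
  (forall x x', X x -> X x' -> enorm (q x - q x') <= G * enorm (x - x')) ->
  smooth qinv ->
  (forall y u, Y y -> enorm ('D_u qinv y) <= G * enorm u) ->
  (forall y u v, Y y -> enorm ('D_v ('D_u qinv) y) <= G * enorm u * enorm v) ->
  (forall x y, Y x -> Y y ->
     Rf x >= Rf y + dotv (grad Rf y) (x - y) + 2^-1 * enorm (x - y) ^+ 2) ->
  (forall y, Y y -> enorm (grad Rf y) <= G) ->
  (forall y u v w, Y y ->
     `|'D_w ('D_v ('D_u Rf)) y| <= G * enorm u * enorm v * enorm w) ->
  (forall z w w', Y z -> Y w -> Y w' ->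
     `|bregman Rf z w - bregman Rf z w'| <= G * enorm (w - w')) ->
  (* the step *)
  0 < eta -> X xt -> 0 < Ghat -> enorm g <= Ghat ->
  let yt := q xt in
  let gt := ((invmx (Jac q xt))^T *m g^T)^T in
  Y y1 ->
  (forall y, Y y ->
     dotv gt (y1 - yt) + eta^-1 * bregman Rf y1 yt
       <= dotv gt (y - yt) + eta^-1 * bregman Rf y yt) ->
  X x1 ->
  (forall x, X x ->
     dotv g (x1 - xt) + (2 * eta)^-1 * enorm (x1 - xt) ^+ 2
       <= dotv g (x - xt) + (2 * eta)^-1 * enorm (x - xt) ^+ 2) ->
  enorm (y1 - q x1) <= G ^+ 5 * (5 * Ghat ^+ 2 + Ghat ^+ 3 * eta) * eta ^+ 2.
Proof.
move=> cX _ cY _ sq qXY qiYX qiq qqi sR _ hessH G1 qLip sqi Dqi DDqi sconv _ D3 _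
  eta0 Xxt Ghat0 gB yt gt Yy1 opty Xx1 optx.
have Yyt : Y yt := qXY xt Xxt.
have xtE : qinv yt = xt := qiq xt Xxt.
have G0 : 0 < G by apply: lt_trans G1; exact: ltr01.
have dR : forall y, differentiable Rf y by move=> y; apply: smooth0.
have dqi : forall y, differentiable qinv y by move=> y; apply: smooth0.
have dq : forall y, differentiable q y by move=> y; apply: smooth0.
set M := 'J q xt.
have [uM HE] : M \in unitmx /\ hess Rf yt = invmx M *m (invmx M)^T.
  have [h1 h2] := hessH xt Xxt.
  apply: hess_inv_form => //; rewrite h2 /Jac trmxK //.
set P := invmx M.
have K0' : forall y, Y y -> 'D_(y - yt) qinv yt = (y - yt) *m P.
  move=> y Yy; have := chain_id cY Yyt Yy qqi (dqi yt) (dq _).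
  rewrite xtE -/M => E; by rewrite -(mulmxK uM ('D_(y - yt) qinv yt)) E.
have K0 : forall y z, Y y -> Y z -> 'D_(y - z) qinv yt = (y - z) *m P.
  move=> y z Yy Yz.
  have -> : y - z = (y - yt) - (z - yt) by rewrite opprB addrA subrK.
  rewrite DlinB // (K0' y Yy) (K0' z Yz); exact/esym/mulmxBl.
have K1 : forall y z, Y y -> Y z -> dotv gt (y - z) = dotv g ('D_(y - z) qinv yt).
  move=> y z Yy Yz; rewrite (K0 y z Yy Yz) /gt /Jac -/M gt_form.
  exact: gt_dot.
have K3 : forall a b c e, Y a -> Y b -> Y c -> Y e ->
    'D_(c - e) ('D_(a - b) Rf) yt = dotv ('D_(a - b) qinv yt) ('D_(c - e) qinv yt).
  move=> a b c e Ya Yb Yc Ye.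
  by rewrite hess_form // HE hess_dot (K0 a b Ya Yb) (K0 c e Yc Ye).
have K2 : forall v, dotv (grad Rf yt) v = 'D_v Rf yt by move=> v; apply: grad_dot.
have comb_sub : forall (z y p : 'rV[R]_d) (t : R),
    t *: z + (1 - t) *: y - p = t *: (z - p) + (1 - t) *: (y - p).
  move=> z y p t; rewrite !scalerBr addrACA -opprD -scalerDl.
  by rewrite [t + _]addrC subrK scale1r.
pose Phi y := dotv gt (y - yt) + eta^-1 * bregman Rf y yt.
have S1 : forall z, Y z -> (2 * eta)^-1 * enorm (z - y1) ^+ 2 <= Phi z - Phi y1.
  apply: (min_strong cY Yy1); first by rewrite invr_ge0 mulr_ge0 // ltW.
    exact: opty.
  move=> z t Yz /andP[t0 t1].
  have Ym : Y (t *: z + (1 - t) *: y1) by apply: cY => //; rewrite (ltW t0) (ltW t1).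
  have := SCcomb sconv Yz Yy1 Ym (introT andP (conj (ltW t0) (ltW t1))).
  rewrite /Phi /bregman !comb_sub !(dotvDr, dotvZr, dotvNr).
  set N := enorm _ ^+ 2 => h.
  have e0 : 0 <= eta^-1 by rewrite invr_ge0 ltW.
  have := ler_wpM2l e0 h.
  have -> : (2 * eta)^-1 = 2^-1 * eta^-1 by rewrite invfM.
  move=> h2.
  nra.
pose psi x := dotv g (x - xt) + (2 * eta)^-1 * enorm (x - xt) ^+ 2.
have S2 : forall x, X x -> (2 * eta)^-1 * enorm (x - x1) ^+ 2 <= psi x - psi x1.
  apply: (min_strong cX Xx1); first by rewrite invr_ge0 mulr_ge0 // ltW.
    exact: optx.
  move=> z t Xz /andP[t0 t1].
  rewrite /psi !comb_sub enorm_comb2.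
  have -> : z - xt - (x1 - xt) = z - x1 by rewrite opprB addrA subrK.
  rewrite !(dotvDr, dotvZr, dotvNr).
  rewrite le_eqVlt; apply/orP; left; apply/eqP; ring.
have Phi0 : Phi yt = 0 by rewrite /Phi /bregman !subrr !dotv0r subrr mulr0 addr0.
have psi0 : psi xt = 0 by rewrite /psi subrr dotv0r enorm0 expr0n /= mulr0 addr0.
have bregLB : forall y, Y y -> 2^-1 * enorm (y - yt) ^+ 2 <= bregman Rf y yt.
  move=> y Yy; have := sconv y yt Yy Yyt; rewrite /bregman; lra.
have GhG : 0 <= G * Ghat by rewrite mulr_ge0 // ltW.
have B1 : enorm (y1 - yt) <= G * Ghat * eta.
  have h := S1 yt Yyt; rewrite Phi0 /Phi in h.
  have hb := bregLB y1 Yy1.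
  have hd : - (Ghat * (G * enorm (y1 - yt))) <= dotv gt (y1 - yt).
    rewrite (K1 y1 yt Yy1 Yyt).
    have b : enorm g * enorm ('D_(y1 - yt) qinv yt) <= Ghat * (G * enorm (y1 - yt)).
      apply: ler_pM; rewrite ?enorm_ge0 //; exact: Dqi.
    move: (dotv_abs g ('D_(y1 - yt) qinv yt)); rewrite ler_norml => /andP[a _].
    lra.
  rewrite enorm_sub in h.
  apply: quad_bound; rewrite ?enorm_ge0 //.
  have e0 : 0 < eta^-1 by rewrite invr_gt0.
  have hb2 := ler_wpM2l (ltW e0) hb.
  rewrite invfM in h.
  move: h hd hb2; set n := enorm _.
  move=> h hd hb2.
  have : n ^+ 2 * eta^-1 <= Ghat * G * n by nra.
  move=> h2; have := ler_wpM2r (ltW eta0) h2; rewrite divfK ?gt_eqF // => h3.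
  apply: (le_trans h3); rewrite le_eqVlt; apply/orP; left; apply/eqP; ring.
have B2 : enorm (x1 - xt) <= Ghat * eta.
  have h := S2 xt Xxt; rewrite psi0 /psi enorm_sub in h.
  have hd : - (Ghat * enorm (x1 - xt)) <= dotv g (x1 - xt).
    have b : enorm g * enorm (x1 - xt) <= Ghat * enorm (x1 - xt).
      by apply: ler_wpM2r; rewrite ?enorm_ge0.
    move: (dotv_abs g (x1 - xt)); rewrite ler_norml => /andP[a _].
    lra.
  apply: quad_bound; [exact: enorm_ge0|exact: eta0|exact: ltW|].
  move: h hd; set n := enorm _ => h hd.
  have h2 : n ^+ 2 * (2 * eta)^-1 <= 2^-1 * Ghat * n by lra.
  have := ler_wpM2r (ltW (mulr_gt0 (ltr0Sn _ 1) eta0)) h2.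
  have -> : n ^+ 2 * (2 * eta)^-1 * (2 * eta) = n ^+ 2.
    by field; rewrite gt_eqF.
  move=> h3; apply: (le_trans h3); rewrite le_eqVlt; apply/orP; left; apply/eqP.
  by field.
have B3 : enorm (q x1 - yt) <= G * Ghat * eta.
  apply: le_trans (qLip x1 xt Xx1 Xxt) _.
  rewrite -mulrA; apply: ler_wpM2l; [exact: ltW | exact: B2].
set ys := q x1.
have Yys : Y ys := qXY x1 Xx1.
have qiys : qinv ys = x1 := qiq x1 Xx1.
set xs := qinv y1.
have Xxs : X xs := qiYX y1 Yy1.
have qxs : q xs = y1 := qqi y1 Yy1.
pose Ef := fun y => (dotv gt (y - yt) + eta^-1 * (Rf y - Rf yt - dotv (grad Rf yt) (y - yt)))
   - (dotv g (qinv y - xt) + (2 * eta)^-1 * dotv (qinv y - xt) (qinv y - xt)).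
pose dE y w := dotv gt w + eta^-1 * ('D_w Rf y - dotv (grad Rf yt) w)
   - (dotv g ('D_w qinv y) + (2 * eta)^-1 * (2 * dotv (qinv y - xt) ('D_w qinv y))).
have IE : forall y w, is_derive y w Ef (dE y w).
  move=> y w.
  have Iid : is_derive y w (fun z : 'rV[R]_d => z - yt) w.
    by apply: is_derive_eq; rewrite subr0.
  have I1 := dot_derive' gt Iid.
  have I3 := dot_derive' (grad Rf yt) Iid.
  have I2 : is_derive y w Rf ('D_w Rf y) by apply/derivableP/diff_derivable.
  have Iq : is_derive y w qinv ('D_w qinv y) by apply/derivableP/diff_derivable.
  have Iq' : is_derive y w (fun z => qinv z - xt) ('D_w qinv y).
    by apply: is_derive_eq; rewrite subr0.
  have I4 := dot_derive' g Iq'.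
  have I5 := dot2_derive' Iq'.
  by rewrite /Ef /dE; apply: is_derive_eq; rewrite subr0.
have EfE : forall y, Ef y = Phi y - psi (qinv y).
  by move=> y; rewrite /Ef /Phi /psi /bregman enorm_sq.
set v := ys - y1.
set Nv := enorm v.
set Nx := enorm (xs - x1).
have MI : (2 * eta)^-1 * Nv ^+ 2 + (2 * eta)^-1 * Nx ^+ 2 <= Ef ys - Ef y1.
  have h1 := S1 ys Yys; have h2 := S2 xs Xxs.
  rewrite !EfE qiys -/xs; rewrite -/v -/Nv in h1; rewrite -/Nx in h2; lra.
have Lip : Nv <= G * Nx.
  rewrite /Nv /v enorm_sub -qxs /ys; exact: qLip.
have Sc : 0 <= G * Ghat * eta by rewrite mulr_ge0 // ltW.
have Yxi : forall t, 0 <= t <= 1 -> Y (y1 + t *: v).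
  by move=> t t01; rewrite /v -comb_eq; apply: cY.
have Nxi : forall t, 0 <= t <= 1 -> enorm (y1 + t *: v - yt) <= G * Ghat * eta.
  move=> t /andP[t0 t1]; rewrite /v -comb_eq comb_sub.
  apply: le_trans (enormD _ _) _; rewrite !enormZ ger0_norm // ger0_norm ?subr_ge0 //.
  have t1' : 0 <= 1 - t by rewrite subr_ge0.
  have := ler_wpM2l t0 B3; have := ler_wpM2l t1' B1.
  nra.
pose Lc := eta * G ^+ 2 * Ghat ^+ 2 * (1 + G / 2 + 3 * G ^+ 2 / 2).
have Nv0 : 0 <= Nv by exact: enorm_ge0.
have BND : forall xi, Y xi -> enorm (xi - yt) <= G * Ghat * eta -> dE xi v <= Nv * Lc.
  move=> xi Yxi' Nxi'.
  set w := xi - yt; set s := enorm w.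
  have s0 : 0 <= s by exact: enorm_ge0.
  set Dv0 := 'D_v qinv yt; set Dw0 := 'D_w qinv yt; set DvX := 'D_v qinv xi.
  have Ypt : forall t, 0 <= t <= 1 -> Y (yt + t *: w).
    by move=> t t01; rewrite /w -comb_eq; apply: cY.
  have pt1 : yt + 1 *: w = xi by rewrite scale1r /w addrC subrK.
  have pt0 : yt + 0 *: w = yt by rewrite scale0r addr0.
  have HA : `|'D_v Rf xi - 'D_v Rf yt - dotv Dv0 Dw0| <= G * Nv * s * s / 2.
    have := @taylor01_abs R (fun t => 'D_v Rf (yt + t *: w))
      (fun t => 'D_w ('D_v Rf) (yt + t *: w))
      (fun t => 'D_w ('D_w ('D_v Rf)) (yt + t *: w)) (G * Nv * s * s).
    rewrite /= pt1 pt0 -(K3 ys y1 xi yt Yys Yy1 Yxi' Yyt) -/v -/w; apply.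
    - by move=> t; apply: line_derive; apply: diff_derivable; exact: smooth1.
    - by move=> t; apply: line_derive; apply: diff_derivable; exact: smooth2.
    - by move=> t t01; exact: (D3 _ v w w (Ypt t t01)).
  have HB : enorm (qinv xi - xt - Dw0) <= G * s * s / 2.
    apply: enorm_le_dot; first by rewrite divr_ge0 // !mulr_ge0 // ltW.
    move=> c.
    have := @taylor01_abs R (fun t => dotv c (qinv (yt + t *: w)))
      (fun t => dotv c ('D_w qinv (yt + t *: w)))
      (fun t => dotv c ('D_w ('D_w qinv) (yt + t *: w))) (enorm c * (G * s * s)).
    rewrite /= pt1 pt0 -/Dw0; move=> h.
    have {h} h : `|dotv c (qinv xi) - dotv c (qinv yt) - dotv c Dw0| <= enorm c * (G * s * s) / 2.
      apply: h.
      - by move=> t; apply: line_dot; apply: diff_derivable.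
      - by move=> t; apply: line_dot; apply: diff_derivable; exact: smooth1.
      - move=> t t01; apply: le_trans (dotv_abs _ _) _.
        apply: ler_wpM2l; first exact: enorm_ge0.
        exact: (DDqi _ w w (Ypt t t01)).
    rewrite -xtE !dotvBr; move: h; rewrite ler_norml => /andP[_ h].
    apply: le_trans h _; rewrite le_eqVlt; apply/orP; left; apply/eqP; ring.
  have HC : enorm (DvX - Dv0) <= G * Nv * s.
    apply: enorm_le_dot; first by rewrite !mulr_ge0 // ltW.
    move=> c.
    have := @lip01_abs R (fun t => dotv c ('D_v qinv (yt + t *: w)))
      (fun t => dotv c ('D_w ('D_v qinv) (yt + t *: w))) (enorm c * (G * Nv * s)).
    rewrite /= pt1 pt0 -/Dv0 -/DvX; move=> h.
    have {h} h : `|dotv c DvX - dotv c Dv0| <= enorm c * (G * Nv * s).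
      apply: h.
      - by move=> t; apply: line_dot; apply: diff_derivable; exact: smooth1.
      - move=> t t01; apply: le_trans (dotv_abs _ _) _.
        apply: ler_wpM2l; first exact: enorm_ge0.
        exact: (DDqi _ v w (Ypt t t01)).
    rewrite !dotvBr; move: h; rewrite ler_norml => /andP[_ h].
    apply: le_trans h _; rewrite le_eqVlt; apply/orP; left; apply/eqP; ring.
  set A := 'D_v Rf xi - 'D_v Rf yt - dotv Dv0 Dw0 in HA.
  set B := qinv xi - xt - Dw0 in HB.
  set C := DvX - Dv0 in HC.
  have Ident : dE xi v = - dotv g C + eta^-1 * (A - dotv Dw0 C - dotv B DvX).
    rewrite /dE (K1 ys y1 Yys Yy1) -/v -/Dv0 -/DvX K2 /A /B /C.
    rewrite !(dotvDl, dotvDr, dotvNl, dotvNr) (dotvC Dv0 Dw0).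
    have E2 : forall Z : R, (2 * eta)^-1 * (2 * Z) = eta^-1 * Z.
      by move=> Z; field; exact: lt0r_neq0.
    rewrite E2.
    move: (dotv g Dv0) (dotv g DvX) ('D_v Rf xi) ('D_v Rf yt) (dotv (qinv xi) DvX)
      (dotv xt DvX) (dotv Dw0 Dv0) (dotv Dw0 DvX) (eta^-1) => ? ? ? ? ? ? ? ? ?.
    ring.
  have HDw : enorm Dw0 <= G * s := Dqi yt w Yyt.
  have HDvX : enorm DvX <= G * Nv := Dqi xi v Yxi'.
  have a1 : `|dotv g C| <= Ghat * (G * Nv * s).
    apply: le_trans (dotv_abs _ _) _; apply: ler_pM => //; exact: enorm_ge0.
  have a2 : `|dotv Dw0 C| <= G * s * (G * Nv * s).
    apply: le_trans (dotv_abs _ _) _; apply: ler_pM => //; exact: enorm_ge0.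
  have a3 : `|dotv B DvX| <= G * s * s / 2 * (G * Nv).
    apply: le_trans (dotv_abs _ _) _; apply: ler_pM => //; exact: enorm_ge0.
  have eI : 0 < eta^-1 by rewrite invr_gt0.
  have sS : s <= G * Ghat * eta by [].
  have T1 : Ghat * (G * Nv * s) <= Nv * (eta * G ^+ 2 * Ghat ^+ 2).
    have : Ghat * G * Nv * s <= Ghat * G * Nv * (G * Ghat * eta).
      by apply: ler_wpM2l => //; rewrite !mulr_ge0 // ltW.
    move=> h; apply: le_trans (le_trans _ h) _.
      by rewrite le_eqVlt; apply/orP; left; apply/eqP; ring.
    by rewrite le_eqVlt; apply/orP; left; apply/eqP; ring.
  have s2 : s ^+ 2 <= (G * Ghat * eta) ^+ 2 by rewrite ler_sqr // nnegrE.
  have T2 : eta^-1 * (G * Nv * s * s / 2 + G * s * (G * Nv * s) + G * s * s / 2 * (G * Nv))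
      <= Nv * (eta * G ^+ 2 * Ghat ^+ 2 * (G / 2 + 3 * G ^+ 2 / 2)).
    have k0 : 0 <= eta^-1 * Nv * (G / 2 + 3 * G ^+ 2 / 2).
      have : 0 <= G / 2 + 3 * G ^+ 2 / 2.
        by rewrite addr_ge0 // divr_ge0 // ?mulr_ge0 // ?exprn_ge0 // ltW.
      by move=> h; rewrite !mulr_ge0 // ltW.
    have := ler_wpM2l k0 s2.
    move=> h; apply: le_trans (le_trans _ h) _.
      by rewrite le_eqVlt; apply/orP; left; apply/eqP; field; exact: lt0r_neq0.
    rewrite le_eqVlt; apply/orP; left; apply/eqP; field; exact: lt0r_neq0.
  rewrite Ident /Lc.
  have hA := ler_normr A 0.
  move: HA a1 a2 a3; rewrite !ler_norml => /andP[HA1 HA2] /andP[a11 a12] /andP[a21 a22] /andP[a31 a32].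
  have : A - dotv Dw0 C - dotv B DvX <=
     G * Nv * s * s / 2 + G * s * (G * Nv * s) + G * s * s / 2 * (G * Nv).
    apply: lerD; [apply: lerD => //; by rewrite lerNl | by rewrite lerNl].
  move=> /(ler_wpM2l (ltW eI)) h.
  have -> : Nv * (eta * G ^+ 2 * Ghat ^+ 2 * (1 + G / 2 + 3 * G ^+ 2 / 2)) =
     Nv * (eta * G ^+ 2 * Ghat ^+ 2) + Nv * (eta * G ^+ 2 * Ghat ^+ 2 * (G / 2 + 3 * G ^+ 2 / 2)).
    by field.
  apply: lerD.
    rewrite lerNl; apply: le_trans _ a11; rewrite lerN2; exact: T1.
  exact: le_trans h T2.
have He : forall t : R, is_derive t (1:R) (fun t => Ef (y1 + t *: v)) (dE (y1 + t *: v) v).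
  move=> t; have h := IE (y1 + t *: v) v.
  have := line_derive (@ex_derive _ _ _ _ _ _ _ h); by rewrite derive_val.
have MV : Ef ys - Ef y1 <= Nv * Lc.
  have := lipab (f := fun t => Ef (y1 + t *: v)) (M := Nv * Lc) ler01 He.
  have hb : forall t, 0 <= t <= 1 -> dE (y1 + t *: v) v <= Nv * Lc.
    by move=> t t01; apply: BND; [exact: Yxi | exact: Nxi].
  have -> : y1 + 1 *: v = ys by rewrite scale1r /v addrCA subrr addr0.
  by move=> /(_ hb); rewrite /= scale0r addr0 subr0 mulr1.
rewrite enorm_sub -/v -/Nv.
exact: (@final_arith _ G eta Ghat Nv Nx _ G1 eta0 Ghat0 Nv0 (enorm_ge0 _) MI MV Lip).
Qed.
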